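(* Let $H$ be a finite $p$-group with center $Z(H)$ and let $A$ be a maximal abelian subgroup of $H$. Then $m_{\mathsf{faithful}}(H)\le m_{\mathsf{faithful}}(Z(H))\,[H:A]$.
   Context: For a finite group $G$, $m_{\mathsf{faithful}}(G)$ denotes the smallest dimension of a faithful complex representation of $G$. *)

(* Defs.v *)
From HB Require Import structures.
From mathcomp Require Import all_boot all_order all_algebra all_fingroup all_solvable all_field all_character.
From Stdlib Require Import ClassicalDescription.
Set Implicit Arguments. Unset Strict Implicit. Unset Printing Implicit Defensive.

Definition has_faithful_rep (gT : finGroupType) (G : {group gT}) (n : nat) : Prop :=
  exists rG : mx_representation algC G n, mx_faithful rG.

Definition decP (P : Prop) : bool :=
  if excluded_middle_informative P then true else false.

Lemma decPP (P : Prop) : reflect P (decP P).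
Proof. by rewrite /decP; case: excluded_middle_informative => h; constructor. Qed.

Lemma has_faithful_rep_ex_dec (gT : finGroupType) (G : {group gT}) :
  (exists n, has_faithful_rep G n) -> exists n, decP (has_faithful_rep G n).
Proof. by case=> n h; exists n; apply/decPP. Qed.

(* m_faithful G : smallest dimension of a faithful complex representation of G
   (such a representation always exists, e.g. the regular one; the default
   value 0 in the impossible other branch is irrelevant). *)
Definition m_faithful (gT : finGroupType) (G : {group gT}) : nat :=
  match excluded_middle_informative (exists n, has_faithful_rep G n) with
  | left h => ex_minn (has_faithful_rep_ex_dec h)
  | right _ => 0
  end.

(* Main.v *)
Require Import Defs.
From HB Require Import structures.
From mathcomp Require Import all_boot all_order all_algebra all_fingroup all_solvable all_field all_character.
From Stdlib Require Import ClassicalDescription.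
Import GRing.Theory Num.Theory.

Lemma mf_spec (gT : finGroupType) (G : {group gT}) :
  has_faithful_rep G (m_faithful G) /\
  (forall n, has_faithful_rep G n -> (m_faithful G <= n)%N).
Proof.
rewrite /m_faithful; case: excluded_middle_informative => [h|h]; last first.
  by exfalso; apply: h; exists #|G|; exists (regular_repr algC G); apply: regular_mx_faithful.
case: ex_minnP => m /decPP Hm Hmin; split=> // n Hn.
by apply: Hmin; apply/decPP.
Qed.

Local Open Scope ring_scope.
Lemma ext_lin (gT : finGroupType) (Z A : {group gT}) :
  Z \subset A -> abelian A ->
  forall i : Iirr Z, exists j : Iirr A, 'Res[Z] 'chi_j = 'chi_i.
Proof.
move=> sZA abA i.
have nz : 'Ind[A] 'chi_i != 0.
  by rewrite cfInd_eq0 ?irr_char ?irr_neq0.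
have [j Hj] := neq0_has_constt nz.
exists j.
rewrite constt_Ind_Res in Hj.
have lin : 'Res[Z] 'chi_j \is a linear_char.
  by apply: cfRes_lin_char; apply/char_abelianP.
have [k Hk] := irrP (lin_char_irr lin).
by move: Hj; rewrite Hk constt_irr inE => /eqP ->.
Qed.

Local Close Scope ring_scope.
Theorem corollary3p6 (gT : finGroupType) (p : nat) (H A : {group gT}) :
  prime p -> (p.-group H)%g ->
  ([max A | (A \subset H) && abelian A])%g ->
  m_faithful H <= m_faithful ('Z(H))%G * #|H : A|%g.
Proof.
Local Open Scope ring_scope.
move=> pr_p pH /maxgroupP [/andP [sAH abA] maxA].
set Z := 'Z(H)%G.
have sZA : Z \subset A.
  have sJ : (A <*> Z)%G \subset H by rewrite join_subG sAH center_sub.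
  have abJ : abelian (A <*> Z)%G.
    by rewrite /= abelianY abA center_abelian /= (subset_trans (subsetIr _ _)) ?centS.
  have := maxA (A <*> Z)%G; rewrite sJ abJ => /(_ isT (joing_subl _ _)) <-.
  exact: joing_subr.
have [[rG fG] _] := mf_spec _ Z%G.
set m := m_faithful Z in rG fG *.
set chi := cfRepr rG.
have [n Hn] := char_sum_irrP (cfRepr_char rG).
have [f Hf] := fin_all_exists (ext_lin _ _ _ sZA abA).
pose psi : 'CF(A) := \sum_i (n i)%:R *: 'chi_(f i).
have psi_char : psi \is a character.
  by apply: rpred_sum => i _; rewrite scaler_nat rpredMn ?irr_char.
have Rpsi : 'Res[Z] psi = chi.
  rewrite /chi Hn /psi linear_sum; apply: eq_bigr => i _.
  by rewrite linearZ /= Hf.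
pose Theta := 'Ind[H] psi.
have Th_char : Theta \is a character by apply: cfInd_char.
have kerZ : cfker Theta :&: 'Z(H)%g \subset [1 gT]%g.
  have k1 : cfker chi \subset [1 gT]%g by rewrite /chi cfker_repr.
  have [psi0 | psi_nz] := eqVneq psi 0.
    move: Rpsi; rewrite psi0 linear0 => chi0.
    move: k1; rewrite -chi0 cfker_cfun0 => k1.
    exact: subset_trans (subsetIr _ _) k1.
  rewrite /Theta cfker_Ind // ?(subset_trans sZA sAH) //.
  apply: subset_trans k1; rewrite -Rpsi cfker_Res //.
  by apply/subsetP => x; rewrite !in_setI => /andP [xk xZ]; rewrite xZ (subsetP (gcore_sub _ _) _ xk).

have ker1 : cfker Theta = [1 gT]%g.
  apply/eqP; apply: contraTT kerZ => ntk.
  have := meet_center_nil (pgroup_nil pH) (cfker_normal Theta) ntk.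
  by rewrite subG1.
have [[d rH] ThE] := char_reprP Th_char.
have [_ Hmin] := mf_spec _ H.
have dE : (d = m * #|H : A|%g)%N.
  have : Theta 1%g = d%:R by rewrite ThE cfRepr1.
  rewrite /Theta cfInd1 // -(cfRes1 Z) Rpsi /chi cfRepr1 -natrM => /eqP.
  by rewrite eqr_nat => /eqP <-; rewrite mulnC.
have fH : has_faithful_rep H d.
  exists rH.
  have := cfker_repr rH.
  rewrite -ThE ker1 => E.
  by rewrite /mx_faithful -E.
apply: (leq_trans (Hmin d fH)).
by rewrite dE.
Qed.
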